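(* Let $\bullet\in\{0,L_p,L,1_p,1\}$, $\mathbf{x}_0\in\mathbb{R}^d$ and $\mathbf{A}\in C^\bullet_{\mathbf{x}_0}(\mathbb{R}^d,\mathbb{R}^{m\times n})$. Then the pointwise Moore–Penrose pseudoinverse $\mathbf{A}^+:\mathbb{R}^d\to\mathbb{R}^{n\times m}$, $\mathbf{x}\mapsto \mathbf{A}(\mathbf{x})^+$, belongs to $C^\bullet_{\mathbf{x}_0}$ if and only if $\lim_{\mathbf{x}\to\mathbf{x}_0}\mathrm{rank}(\mathbf{A}(\mathbf{x}))=\mathrm{rank}(\mathbf{A}(\mathbf{x}_0))$ (i.e. the rank of $\mathbf{A}$ is constant on a neighborhood of $\mathbf{x}_0$).
   Context: Regularity classes: for finite-dimensional normed spaces $X,Y$, $D\subset X$, $f:D\to Y$, $x_0\in D$, write $f\in C^\bullet_{x_0}$ if, respectively, ($\bullet=0$) $f$ is continuous at $x_0$; ($L_p$) $f$ is pointwise Lipschitz at $x_0$, i.e. there are $r>0,L\ge 0$ with $x_0+rB_X\subset D$ and $\|f(x)-f(x_0)\|\le L\|x-x_0\|$ for $x\in x_0+rB_X$; ($L$) $f$ is Lipschitz on a neighborhood of $x_0$; ($1_p$) $f$ is Fréchet differentiable at $x_0$; ($1$) $f$ is differentiable on a neighborhood of $x_0$ and its derivative is continuous at $x_0$. $B_X$ is the closed unit ball. Matrices carry the spectral norm. *)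

(* Defs.v *)
From HB Require Import structures.
From Stdlib Require Import Reals Lra ClassicalEpsilon FunctionalExtensionality.
From mathcomp Require Import all_boot all_order all_algebra.

Set Implicit Arguments.
Unset Strict Implicit.
Unset Printing Implicit Defensive.

Import GRing.Theory.

Definition Req_bool (x y : R) : bool :=
  if Req_EM_T x y then true else false.

Lemma Req_boolP : Equality.axiom Req_bool.
Proof. by move=> x y; rewrite /Req_bool; case: Req_EM_T => H; constructor. Qed.

HB.instance Definition _ := hasDecEq.Build R Req_boolP.

Definition R_find (P : pred R) (n : nat) : option R :=
  if excluded_middle_informative (exists x, P x)
  then Some (epsilon (inhabits R0) (fun x => P x)) else None.

Lemma R_find_correct (P : pred R) n x : R_find P n = Some x -> P x.
Proof.
rewrite /R_find; case: excluded_middle_informative => // H [<-].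
exact: (epsilon_spec (inhabits R0) (fun x => P x) H).
Qed.

Lemma R_find_complete (P : pred R) : (exists x, P x) -> exists n, R_find P n.
Proof. by move=> H; exists 0%N; rewrite /R_find; case: excluded_middle_informative. Qed.

Lemma R_find_ext (P Q : pred R) : P =1 Q -> R_find P =1 R_find Q.
Proof. by move=> /functional_extensionality -> . Qed.

HB.instance Definition _ :=
  hasChoice.Build R R_find_correct R_find_complete R_find_ext.

Lemma R_addA : associative Rplus.
Proof. by move=> x y z; rewrite Rplus_assoc. Qed.

Lemma R_addNr : left_inverse R0 Ropp Rplus.
Proof. by move=> x; rewrite Rplus_comm Rplus_opp_r. Qed.

HB.instance Definition _ :=
  GRing.isZmodule.Build R R_addA Rplus_comm Rplus_0_l R_addNr.

Lemma R_mulA : associative Rmult.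
Proof. by move=> x y z; rewrite Rmult_assoc. Qed.
Lemma R_mulDl : left_distributive Rmult Rplus.
Proof. by move=> x y z; rewrite Rmult_plus_distr_r. Qed.
Lemma R_one_neq0 : R1 != R0.
Proof. by apply/eqP; exact: R1_neq_R0. Qed.

HB.instance Definition _ :=
  GRing.Zmodule_isComNzRing.Build R R_mulA Rmult_comm Rmult_1_l R_mulDl R_one_neq0.

Definition R_inv (x : R) : R := if x == R0 then R0 else Rinv x.

Lemma R_mulVf (x : R) : x != 0%R -> (R_inv x * x = 1)%R.
Proof.
move=> /eqP Hx; rewrite /R_inv; case: eqP => // _.
by apply: Rinv_l.
Qed.

Lemma R_inv0 : R_inv 0%R = 0%R.
Proof. by rewrite /R_inv eqxx. Qed.

HB.instance Definition _ := GRing.ComNzRing_isField.Build R R_mulVf R_inv0.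

Local Open Scope R_scope.

Definition vnorm (k : nat) (v : 'cV[R]_k) : R :=
  sqrt (\big[Rplus/R0]_(i < k) (v i ord0 * v i ord0)).

(* Spectral (operator) norm of a p x q matrix: the least upper bound of
   { |M v| : |v| <= 1 } (Euclidean norms).  The lub exists and is unique;
   we select it with Hilbert's epsilon. *)
Definition specnorm (p q : nat) (M : 'M[R]_(p, q)) : R :=
  epsilon (inhabits R0)
    (is_lub (fun r => exists v : 'cV[R]_q, vnorm v <= 1 /\ r = vnorm (M *m v)%R)).

Inductive regclass := C0 | CLp | CL | C1p | C1.

Definition cont_at (d p q : nat) (f : 'cV[R]_d -> 'M[R]_(p, q)) (x0 : 'cV[R]_d) : Prop :=
  forall eps, 0 < eps -> exists delta, 0 < delta /\
    forall x, vnorm (x - x0)%R <= delta -> specnorm (f x - f x0)%R < eps.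

Definition ptLipschitz_at (d p q : nat) (f : 'cV[R]_d -> 'M[R]_(p, q)) (x0 : 'cV[R]_d) : Prop :=
  exists r L, 0 < r /\ 0 <= L /\
    forall x, vnorm (x - x0)%R <= r -> specnorm (f x - f x0)%R <= L * vnorm (x - x0)%R.

Definition Lipschitz_near (d p q : nat) (f : 'cV[R]_d -> 'M[R]_(p, q)) (x0 : 'cV[R]_d) : Prop :=
  exists r L, 0 < r /\ 0 <= L /\
    forall x y, vnorm (x - x0)%R <= r -> vnorm (y - x0)%R <= r ->
      specnorm (f x - f y)%R <= L * vnorm (x - y)%R.

(* A linear map R^d -> R^{p x q} is represented by the images Df i of the
   standard basis vectors: h |-> sum_i h_i Df_i. *)
Definition applin (d p q : nat) (Df : 'I_d -> 'M[R]_(p, q)) (h : 'cV[R]_d) : 'M[R]_(p, q) :=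
  (\sum_(i < d) h i ord0 *: Df i)%R.

Definition has_Frechet_deriv (d p q : nat) (f : 'cV[R]_d -> 'M[R]_(p, q))
    (x : 'cV[R]_d) (Df : 'I_d -> 'M[R]_(p, q)) : Prop :=
  forall eps, 0 < eps -> exists delta, 0 < delta /\
    forall y, vnorm (y - x)%R <= delta ->
      specnorm (f y - f x - applin Df (y - x))%R <= eps * vnorm (y - x)%R.

Definition Frechet_diff_at (d p q : nat) (f : 'cV[R]_d -> 'M[R]_(p, q)) (x0 : 'cV[R]_d) : Prop :=
  exists Df, has_Frechet_deriv f x0 Df.

(* Differentiable on a neighborhood of x0, with derivative continuous at x0
   (continuity of a linear-map-valued function = continuity of each of its
   finitely many components Df(.) i, all norms being equivalent). *)
Definition C1_at (d p q : nat) (f : 'cV[R]_d -> 'M[R]_(p, q)) (x0 : 'cV[R]_d) : Prop :=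
  exists r (Df : 'cV[R]_d -> 'I_d -> 'M[R]_(p, q)), 0 < r /\
    (forall x, vnorm (x - x0)%R <= r -> has_Frechet_deriv f x (Df x)) /\
    (forall i, cont_at (fun x => Df x i) x0).

Definition inC (c : regclass) (d p q : nat) (f : 'cV[R]_d -> 'M[R]_(p, q)) (x0 : 'cV[R]_d) : Prop :=
  match c with
  | C0 => cont_at f x0
  | CLp => ptLipschitz_at f x0
  | CL => Lipschitz_near f x0
  | C1p => Frechet_diff_at f x0
  | C1 => C1_at f x0
  end.

Definition is_pinv (m n : nat) (A : 'M[R]_(m, n)) (B : 'M[R]_(n, m)) : Prop :=
  [/\ (A *m B *m A = A)%R, (B *m A *m B = B)%R, ((A *m B)^T = A *m B)%R & ((B *m A)^T = B *m A)%R].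

Definition pinv (m n : nat) (A : 'M[R]_(m, n)) : 'M[R]_(n, m) :=
  epsilon (inhabits 0%R) (is_pinv A).

(* Main.v *)
Require Import Defs.
From HB Require Import structures.
From Stdlib Require Import Reals Lra Psatz ClassicalEpsilon FunctionalExtensionality.
From mathcomp Require Import all_boot all_order all_algebra perm.
From mathcomp Require Import zify.
Set Implicit Arguments.
Unset Strict Implicit.
Unset Printing Implicit Defensive.
Import GRing.Theory.
Local Open Scope R_scope.

Lemma sum_le (I : Type) (r : seq I) (P : pred I) (F G : I -> R) :
  (forall i, P i -> F i <= G i) ->
  (\sum_(i <- r | P i) F i)%R <= (\sum_(i <- r | P i) G i)%R.
Proof.
move=> H; apply: (big_ind2 (fun a b : R => a <= b)) => //.
- exact: Rle_refl.
- by move=> a b c e h1 h2; apply: Rplus_le_compat.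
Qed.

Lemma sum_ge0 (I : Type) (r : seq I) (P : pred I) (F : I -> R) :
  (forall i, P i -> 0 <= F i) -> 0 <= (\sum_(i <- r | P i) F i)%R.
Proof.
move=> H; apply: (big_ind (fun a : R => 0 <= a)) => //.
- exact: Rle_refl.
- by move=> a b h1 h2; change (0 <= a + b); lra.
Qed.

Lemma Rabs_sum (I : Type) (r : seq I) (P : pred I) (F : I -> R) :
  Rabs (\sum_(i <- r | P i) F i)%R <= (\sum_(i <- r | P i) Rabs (F i))%R.
Proof.
apply: (big_ind2 (fun a b : R => Rabs a <= b)).
- by rewrite Rabs_R0; apply: Rle_refl.
- move=> a b c e h1 h2; change (Rabs (a + c) <= b + e).
  by apply: Rle_trans (Rabs_triang _ _) _; lra.
- by move=> i _; apply: Rle_refl.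
Qed.

Lemma sum_const_ord (k : nat) (a : R) : (\sum_(i < k) a)%R = INR k * a.
Proof.
elim: k => [|k IH]; first by rewrite big_ord0 /=; change (0 = 0 * a); ring.
rewrite big_ord_recr IH S_INR; change (INR k * a + a = (INR k + 1) * a); ring.
Qed.

Lemma sum_term_le (I : finType) (F : I -> R) (j : I) :
  (forall i, 0 <= F i) -> F j <= (\sum_i F i)%R.
Proof.
move=> H; rewrite (bigD1 j) //=.
have := @sum_ge0 _ (index_enum I) (fun i => i != j) F (fun i _ => H i).
by move=> h; change (F j <= F j + (\sum_(i | i != j) F i)%R); lra.
Qed.

Lemma sum_mulr (I : Type) (r : seq I) (P : pred I) (F : I -> R) (a : R) :
  (\sum_(i <- r | P i) F i)%R * a = (\sum_(i <- r | P i) (F i * a))%R.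
Proof. exact: GRing.mulr_suml. Qed.

Lemma sumRD (I : Type) (r : seq I) (P : pred I) (F G : I -> R) :
  (\sum_(i <- r | P i) (F i + G i))%R = (\sum_(i <- r | P i) F i)%R + (\sum_(i <- r | P i) G i)%R.
Proof. exact: big_split. Qed.

Lemma sumRM (I : Type) (r : seq I) (P : pred I) (F : I -> R) c :
  (\sum_(i <- r | P i) (c * F i))%R = c * (\sum_(i <- r | P i) F i)%R.
Proof. by symmetry; exact: GRing.mulr_sumr. Qed.

Lemma vnormE d (v : 'cV[R]_d) : vnorm v = sqrt (\sum_i (v i ord0 * v i ord0))%R.
Proof. by []. Qed.

Lemma sumsq_ge0 d (v : 'cV[R]_d) : 0 <= (\sum_i (v i ord0 * v i ord0))%R.
Proof. by apply: sum_ge0 => i _; apply: Rle_0_sqr. Qed.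

Lemma vnorm_ge0 d (v : 'cV[R]_d) : 0 <= vnorm v.
Proof. exact: sqrt_pos. Qed.

Lemma vnorm_sq d (v : 'cV[R]_d) : vnorm v * vnorm v = (\sum_i (v i ord0 * v i ord0))%R.
Proof. by rewrite vnormE sqrt_sqrt //; apply: sumsq_ge0. Qed.

Lemma vnorm0 d : vnorm (0 : 'cV[R]_d) = 0.
Proof.
rewrite vnormE big1 ?sqrt_0 // => i _; rewrite mxE; change (0 * 0 = 0); ring.
Qed.

Lemma vnorm_subrr d (x : 'cV[R]_d) : vnorm (x - x)%R = 0.
Proof. by rewrite subrr vnorm0. Qed.

Lemma vnorm_coord d (v : 'cV[R]_d) i : Rabs (v i ord0) <= vnorm v.
Proof.
rewrite vnormE -sqrt_Rsqr_abs; apply: sqrt_le_1_alt.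
rewrite /Rsqr; exact: (@sum_term_le _ (fun i => v i ord0 * v i ord0) i (fun k => Rle_0_sqr _)).
Qed.

Lemma vnorm_le_sum d (v : 'cV[R]_d) : vnorm v <= (\sum_i Rabs (v i ord0))%R.
Proof.
have H0 := @sum_ge0 _ (index_enum 'I_d) predT (fun i => Rabs (v i ord0)) (fun i _ => Rabs_pos _).
rewrite vnormE; apply: Rsqr_incr_0_var; last by [].
rewrite Rsqr_sqrt; last exact: sumsq_ge0.
rewrite /Rsqr.
set S := (\sum_i Rabs (v i ord0))%R.
have -> : S * S = (\sum_i (Rabs (v i ord0) * S))%R by exact: GRing.mulr_suml.
apply: sum_le => i _.
change (v i ord0 * v i ord0 <= Rabs (v i ord0) * S). have e : v i ord0 * v i ord0 = Rabs (v i ord0) * Rabs (v i ord0) by rewrite -Rabs_mult Rabs_pos_eq //; apply: Rle_0_sqr. rewrite e.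
apply: Rmult_le_compat_l; first exact: Rabs_pos.
exact: (@sum_term_le _ (fun i => Rabs (v i ord0)) i (fun k => Rabs_pos _)).
Qed.

Lemma vnorm_add2 d (a b : 'cV[R]_d) s : vnorm a <= s -> vnorm b <= s -> vnorm (a + b)%R <= 2 * s.
Proof.
move=> ha hb.
have ha0 := vnorm_ge0 a; have hb0 := vnorm_ge0 b.
have sa := vnorm_sq a; have sb := vnorm_sq b; have sab := vnorm_sq (a + b)%R.
have hab0 := vnorm_ge0 (a + b)%R.
have key : vnorm (a+b)%R * vnorm (a+b)%R <= 2 * (vnorm a * vnorm a) + 2 * (vnorm b * vnorm b).
  rewrite sab sa sb.
  have -> : 2 * (\sum_i (a i ord0 * a i ord0))%R + 2 * (\sum_i (b i ord0 * b i ord0))%R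
     = (\sum_i (Rplus (Rmult 2 (a i ord0 * a i ord0)) (Rmult 2 (b i ord0 * b i ord0))))%R.
    by rewrite sumRD !sumRM.
  apply: sum_le => i _; rewrite !mxE; change ((a i ord0 + b i ord0) * (a i ord0 + b i ord0)
     <= 2 * (a i ord0 * a i ord0) + 2 * (b i ord0 * b i ord0)).
  have h := Rle_0_sqr (a i ord0 - b i ord0); rewrite /Rsqr in h; clear -h; nra.
have h1 : vnorm a * vnorm a <= s * s by apply: Rmult_le_compat.
have h2 : vnorm b * vnorm b <= s * s by apply: Rmult_le_compat.
have h3 : vnorm (a+b)%R * vnorm (a+b)%R <= (2 * s) * (2 * s) by lra.
apply: Rnot_lt_le => h4.
have : (2 * s) * (2 * s) < vnorm (a+b)%R * vnorm (a+b)%R by apply: Rmult_le_0_lt_compat; lra.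
lra.
Qed.

Lemma vnorm_eq0 d (v : 'cV[R]_d) : (\sum_i (v i ord0 * v i ord0))%R = 0 -> v = 0%R.
Proof.
move=> H; apply/matrixP => i j; rewrite ord1 mxE.
have h1 := @sum_term_le _ (fun i => v i ord0 * v i ord0) i (fun k => Rle_0_sqr _).
have h2 := Rle_0_sqr (v i ord0).
rewrite H in h1; rewrite /Rsqr in h2; change (v i ord0 = 0); move: h1 h2; clear; move=> h1 h2; nra.
Qed.

Lemma vnorm_opp d (v : 'cV[R]_d) : vnorm (- v)%R = vnorm v.
Proof.
rewrite !vnormE; congr sqrt; apply: eq_bigr => i _; rewrite mxE.
change (- v i ord0 * - v i ord0 = v i ord0 * v i ord0); ring.
Qed.

Lemma vnorm_subC d (x y : 'cV[R]_d) : vnorm (x - y)%R = vnorm (y - x)%R.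
Proof. by rewrite -vnorm_opp opprB. Qed.

Definition near d (x0 : 'cV[R]_d) (P : 'cV[R]_d -> Prop) :=
  exists delta, 0 < delta /\ forall x : 'cV[R]_d, vnorm (x - x0)%R <= delta -> P x.

Lemma near_and d (x0 : 'cV[R]_d) P Q : near x0 P -> near x0 Q -> near x0 (fun x => P x /\ Q x).
Proof.
move=> [a [ha HP]] [b [hb HQ]]; exists (Rmin a b); split; first exact: Rmin_pos.
move=> x hx; split; [apply: HP | apply: HQ]; apply: Rle_trans hx _;
  [exact: Rmin_l | exact: Rmin_r].
Qed.

Lemma near_mono d (x0 : 'cV[R]_d) (P Q : _ -> Prop) : (forall x, P x -> Q x) -> near x0 P -> near x0 Q.
Proof. by move=> H [a [ha HP]]; exists a; split => // x /HP /H. Qed.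

Lemma near_all d (x0 : 'cV[R]_d) (P : _ -> Prop) : (forall x, P x) -> near x0 P.
Proof. by move=> H; exists 1; split => //; lra. Qed.

Lemma near_refl d (x0 : 'cV[R]_d) (P : _ -> Prop) : near x0 P -> P x0.
Proof. by move=> [a [ha HP]]; apply: HP; rewrite vnorm_subrr; lra. Qed.

Lemma near_finite d (x0 : 'cV[R]_d) (T : finType) (P : T -> 'cV[R]_d -> Prop) :
  (forall i, near x0 (P i)) -> near x0 (fun x => forall i, P i x).
Proof.
move=> H.
suff: near x0 (fun x => forall i, i \in enum T -> P i x).
  by apply: near_mono => x Hx i; apply: Hx; rewrite mem_enum.
elim: (enum T) => [|a s IH]; first by apply: near_all.
apply: near_mono (near_and (H a) IH) => x [h1 h2] i.
by rewrite in_cons => /orP [/eqP -> //| /h2].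
Qed.

Lemma near_near d (x0 : 'cV[R]_d) (P : _ -> Prop) : near x0 P -> near x0 (fun x => near x P).
Proof.
move=> [a [ha HP]]; exists (a / 2); split; first lra.
move=> x hx; exists (a / 2); split; first lra.
move=> y hy; apply: HP.
have -> : (y - x0 = (y - x) + (x - x0))%R by rewrite addrA subrK.
have h := vnorm_add2 hy hx. lra.
Qed.

Lemma near_le d (x0 : 'cV[R]_d) (P : _ -> Prop) delta : 0 < delta ->
  (forall x, vnorm (x - x0)%R <= delta -> P x) -> near x0 P.
Proof. by move=> h1 h2; exists delta. Qed.

Lemma fin_ub (T : finType) (P : T -> R -> Prop) :
  (forall i a b, a <= b -> P i a -> P i b) -> (forall i, exists a, P i a) ->
  exists a, forall i, P i a.
Proof.
move=> Hm H.
suff: exists a, forall i, i \in enum T -> P i a.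
  by move=> [a Ha]; exists a => i; apply: Ha; rewrite mem_enum.
elim: (enum T) => [|x s [a IH]]; first by exists 0.
have [b Hb] := H x; exists (Rmax a b) => i; rewrite in_cons => /orP [/eqP -> | hi].
  by apply: Hm (Hb); apply: Rmax_r.
by apply: Hm (IH i hi); apply: Rmax_l.
Qed.

Lemma fin_choice (T : finType) (U : Type) (P : T -> U -> Prop) :
  (forall i, exists u, P i u) -> exists f : T -> U, forall i, P i (f i).
Proof.
move=> H; exists (fun i => proj1_sig (constructive_indefinite_description _ (H i))).
by move=> i; case: (constructive_indefinite_description _ _).
Qed.

Lemma prod_diff (a a0 b b0 : R) :
  Rabs (a * b - a0 * b0) <= Rabs a * Rabs (b - b0) + Rabs b0 * Rabs (a - a0).
Proof.
have -> : a * b - a0 * b0 = a * (b - b0) + b0 * (a - a0) by ring.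
by rewrite -!Rabs_mult; apply: Rabs_triang.
Qed.

Lemma inv_diff (a a0 : R) : a <> 0 -> a0 <> 0 ->
  Rabs (/ a - / a0) = Rabs (a - a0) * (/ Rabs a * / Rabs a0).
Proof.
move=> h1 h2.
have -> : / a - / a0 = (a0 - a) * (/ a * / a0) by field.
by rewrite Rabs_mult Rabs_mult !Rabs_inv -Rabs_Ropp Ropp_minus_distr.
Qed.

Lemma R_invE (x : R) : (x^-1)%R = Rinv x.
Proof.
rewrite /GRing.inv /=; rewrite /R_inv; case: eqP => [->|//].
by rewrite Rinv_0.
Qed.

Definition slin d (D : 'I_d -> R) (h : 'cV[R]_d) : R := (\sum_i h i ord0 * D i)%R.

Definition scont d (g : 'cV[R]_d -> R) x0 :=
  forall eps, 0 < eps -> near x0 (fun x => Rabs (g x - g x0) < eps).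

Definition sder d (g : 'cV[R]_d -> R) x (D : 'I_d -> R) :=
  forall eps, 0 < eps -> near x (fun y => Rabs (g y - g x - slin D (y - x)%R) <= eps * vnorm (y - x)%R).

Definition sptL d (g : 'cV[R]_d -> R) x0 :=
  exists L, 0 <= L /\ near x0 (fun x => Rabs (g x - g x0) <= L * vnorm (x - x0)%R).

Definition near2 d (x0 : 'cV[R]_d) (P : 'cV[R]_d -> 'cV[R]_d -> Prop) :=
  exists delta, 0 < delta /\ forall y z : 'cV[R]_d,
    vnorm (y - x0)%R <= delta -> vnorm (z - x0)%R <= delta -> P y z.

Definition sLip d (g : 'cV[R]_d -> R) x0 :=
  exists L, 0 <= L /\ near2 x0 (fun y z => Rabs (g y - g z) <= L * vnorm (y - z)%R).

Definition sC1 d (g : 'cV[R]_d -> R) x0 :=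
  exists D : 'cV[R]_d -> 'I_d -> R,
    near x0 (fun x => sder g x (D x)) /\ forall i, scont (fun x => D x i) x0.

Definition sC (c : regclass) d (g : 'cV[R]_d -> R) x0 :=
  match c with
  | C0 => scont g x0
  | CLp => sptL g x0
  | CL => sLip g x0
  | C1p => exists D, sder g x0 D
  | C1 => sC1 g x0
  end.

Lemma slin_bound d (D : 'I_d -> R) (h : 'cV[R]_d) :
  Rabs (slin D h) <= (\sum_i Rabs (D i))%R * vnorm h.
Proof.
apply: Rle_trans (Rabs_sum _ _ _) _.
rewrite sum_mulr; apply: sum_le => i _.
change (Rabs (h i ord0 * D i) <= Rabs (D i) * vnorm h).
rewrite Rabs_mult Rmult_comm; apply: Rmult_le_compat_l; first exact: Rabs_pos.
exact: vnorm_coord.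
Qed.

Lemma slin_sub d (D1 D2 : 'I_d -> R) h :
  slin D1 h - slin D2 h = slin (fun i => D1 i - D2 i) h.
Proof.
rewrite /slin.
transitivity (\sum_i (h i ord0 * D1 i - h i ord0 * D2 i))%R; first by rewrite sumrB.
apply: eq_bigr => i _.
change (h i ord0 * D1 i - h i ord0 * D2 i = h i ord0 * (D1 i - D2 i)); ring.
Qed.

Lemma slin0 d (D : 'I_d -> R) : slin D 0%R = 0.
Proof.
rewrite /slin big1 // => i _; rewrite mxE; change (0 * D i = 0); ring.
Qed.

Lemma scont_const d (a : R) (x0 : 'cV[R]_d) : scont (fun _ => a) x0.
Proof.
move=> eps he; apply: near_all => x; rewrite Rminus_diag Rabs_R0; lra.
Qed.

Lemma scont_bound d (g : 'cV[R]_d -> R) x0 : scont g x0 ->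
  near x0 (fun x => Rabs (g x) <= Rabs (g x0) + 1).
Proof.
move=> H; apply: near_mono (H 1 Rlt_0_1) => x hx.
have := Rabs_triang_inv (g x) (g x0); lra.
Qed.

Lemma scont_add d (g h : 'cV[R]_d -> R) x0 : scont g x0 -> scont h x0 ->
  scont (fun x => g x + h x) x0.
Proof.
move=> Hg Hh eps he.
apply: near_mono (near_and (Hg (eps/2) ltac:(lra)) (Hh (eps/2) ltac:(lra))) => x [h1 h2].
have -> : g x + h x - (g x0 + h x0) = (g x - g x0) + (h x - h x0) by ring.
have := Rabs_triang (g x - g x0) (h x - h x0); lra.
Qed.

Lemma scont_mul d (g h : 'cV[R]_d -> R) x0 : scont g x0 -> scont h x0 ->
  scont (fun x => g x * h x) x0.
Proof.
move=> Hg Hh eps he.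
set M := Rabs (g x0) + 1; set K := Rabs (h x0) + 1.
have hM : 0 < M by rewrite /M; have := Rabs_pos (g x0); lra.
have hK : 0 < K by rewrite /K; have := Rabs_pos (h x0); lra.
have e1 : 0 < eps / (2 * M) by apply: Rdiv_lt_0_compat; lra.
have e2 : 0 < eps / (2 * K) by apply: Rdiv_lt_0_compat; lra.
apply: near_mono (near_and (scont_bound Hg) (near_and (Hg _ e2) (Hh _ e1))) => x [b [h1 h2]].
apply: Rle_lt_trans (prod_diff _ _ _ _) _.
have t1 : Rabs (g x) * Rabs (h x - h x0) <= M * (eps / (2 * M)).
  apply: Rmult_le_compat; [exact: Rabs_pos | exact: Rabs_pos | exact: b | lra].
have t2 : Rabs (h x0) * Rabs (g x - g x0) <= Rabs (h x0) * (eps / (2 * K)).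
  apply: Rmult_le_compat_l; [exact: Rabs_pos | lra].
have t3 : Rabs (h x0) * (eps / (2 * K)) < K * (eps / (2 * K)).
  by apply: Rmult_lt_compat_r => //; rewrite /K; lra.
have q1 : M * (eps / (2 * M)) = eps / 2 by field; lra.
have q2 : K * (eps / (2 * K)) = eps / 2 by field; lra.
lra.
Qed.

Lemma scont_away d (g : 'cV[R]_d -> R) x0 : scont g x0 -> g x0 <> 0 ->
  near x0 (fun x => Rabs (g x0) / 2 <= Rabs (g x)).
Proof.
move=> H hg.
have hp : 0 < Rabs (g x0) by apply: Rabs_pos_lt.
apply: near_mono (H (Rabs (g x0) / 2) ltac:(lra)) => x hx.
have := Rabs_triang_inv (g x0) (g x); rewrite -Rabs_Ropp Ropp_minus_distr in hx; lra.
Qed.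

Lemma scont_inv d (g : 'cV[R]_d -> R) x0 : scont g x0 -> g x0 <> 0 ->
  scont (fun x => / g x) x0.
Proof.
move=> H hg eps he.
have hp : 0 < Rabs (g x0) by apply: Rabs_pos_lt.
have cc : 0 < Rabs (g x0) * Rabs (g x0) by apply: Rmult_lt_0_compat.
have e1 : 0 < eps * (Rabs (g x0) * Rabs (g x0)) / 2
  by apply: Rdiv_lt_0_compat; [apply: Rmult_lt_0_compat | lra].
apply: near_mono (near_and (scont_away H hg) (H _ e1)) => x [h1 h2].
have gx : g x <> 0 by move=> e; rewrite e Rabs_R0 in h1; lra.
rewrite inv_diff //.
have hx : 0 < Rabs (g x) by apply: Rabs_pos_lt.
have u0 := Rabs_pos (g x - g x0).
move: h1 h2 hx cc e1 hp u0; move: (Rabs (g x0)) (Rabs (g x)) (Rabs (g x - g x0)) => c a u h1 h2 hx cc e1 hp u0.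
have i1 : / a <= 2 / c.
  rewrite /Rdiv; apply: Rle_trans (_ : / (c / 2) <= _); first apply: Rinv_le_contravar; try lra.
  by rewrite Rinv_div; lra.
have i3 : 0 < / c by apply: Rinv_0_lt_compat.
apply: (Rle_lt_trans _ (u * (2 / c * / c))).
  apply: Rmult_le_compat_l => //.
  by apply: Rmult_le_compat_r; lra.
have -> : 2 / c * / c = 2 / (c * c) by field; lra.
apply: (Rlt_le_trans _ ((eps * (c * c) / 2) * (2 / (c * c)))).
  apply: Rmult_lt_compat_r => //; apply: Rdiv_lt_0_compat; lra.
right; field; lra.
Qed.

Lemma scont_local d (g h : 'cV[R]_d -> R) x0 : near x0 (fun x => g x = h x) ->
  scont g x0 -> scont h x0.
Proof.
move=> E H eps he; have e0 := near_refl E.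
by apply: near_mono (near_and E (H eps he)) => x [-> h1]; rewrite -e0.
Qed.

Lemma near_small d (x0 : 'cV[R]_d) e : 0 < e -> near x0 (fun x => vnorm (x - x0)%R <= e).
Proof. by move=> he; exists e; split. Qed.

Lemma scont_ext d (f g : 'cV[R]_d -> R) x0 : (forall y, f y = g y) -> scont f x0 -> scont g x0.
Proof. by move=> E; apply: scont_local; apply: near_all. Qed.

Lemma sptL_cont d (g : 'cV[R]_d -> R) x0 : sptL g x0 -> scont g x0.
Proof.
move=> [L [hL H]] eps he.
have e1 : 0 < eps / (L + 1) by apply: Rdiv_lt_0_compat; lra.
apply: near_mono (near_and H (near_small x0 e1)) => x [h1 h2].
have v0 := vnorm_ge0 (x - x0)%R.
move: h1 h2 v0; move: (vnorm (x - x0)%R) (Rabs (g x - g x0)) => v a h1 h2 v0.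
apply: Rle_lt_trans h1 _.
apply: (Rle_lt_trans _ (L * (eps / (L + 1)))); first by apply: Rmult_le_compat_l.
apply: (Rlt_le_trans _ ((L + 1) * (eps / (L + 1)))); first by apply: Rmult_lt_compat_r; lra.
right; field; lra.
Qed.

Lemma sptL_const d (a : R) (x0 : 'cV[R]_d) : sptL (fun _ => a) x0.
Proof.
exists 0; split; first lra; apply: near_all => x.
rewrite Rminus_diag Rabs_R0 Rmult_0_l; lra.
Qed.

Lemma sptL_add d (g h : 'cV[R]_d -> R) x0 : sptL g x0 -> sptL h x0 ->
  sptL (fun x => g x + h x) x0.
Proof.
move=> [L1 [h1 H1]] [L2 [h2 H2]]; exists (L1 + L2); split; first lra.
apply: near_mono (near_and H1 H2) => x [a1 a2].
have -> : g x + h x - (g x0 + h x0) = (g x - g x0) + (h x - h x0) by ring.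
apply: Rle_trans (Rabs_triang _ _) _; lra.
Qed.

Lemma sptL_mul d (g h : 'cV[R]_d -> R) x0 : sptL g x0 -> sptL h x0 ->
  sptL (fun x => g x * h x) x0.
Proof.
move=> Hg Hh; have B := scont_bound (sptL_cont Hg).
move: Hg Hh => [L1 [h1 H1]] [L2 [h2 H2]].
set M := Rabs (g x0) + 1.
have hM : 0 <= M by rewrite /M; have := Rabs_pos (g x0); lra.
exists (M * L2 + Rabs (h x0) * L1); split.
  by have := Rabs_pos (h x0); move=> ?; apply: Rplus_le_le_0_compat; apply: Rmult_le_pos.
apply: near_mono (near_and B (near_and H1 H2)) => x [b [a1 a2]].
apply: Rle_trans (prod_diff _ _ _ _) _.
have v0 := vnorm_ge0 (x - x0)%R.
have t1 : Rabs (g x) * Rabs (h x - h x0) <= M * (L2 * vnorm (x - x0)%R)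
  by apply: Rmult_le_compat => //; apply: Rabs_pos.
have t2 : Rabs (h x0) * Rabs (g x - g x0) <= Rabs (h x0) * (L1 * vnorm (x - x0)%R)
  by apply: Rmult_le_compat_l => //; apply: Rabs_pos.
move: t1 t2; move: (vnorm (x - x0)%R) => v t1 t2; clear -t1 t2; move=> *; nra.
Qed.

Lemma sptL_inv d (g : 'cV[R]_d -> R) x0 : sptL g x0 -> g x0 <> 0 ->
  sptL (fun x => / g x) x0.
Proof.
move=> Hg hg; have A := scont_away (sptL_cont Hg) hg.
move: Hg => [L [hL H]].
have hp : 0 < Rabs (g x0) by apply: Rabs_pos_lt.
exists (L * (2 / (Rabs (g x0) * Rabs (g x0)))); split.
  apply: Rmult_le_pos => //; apply: Rlt_le; apply: Rdiv_lt_0_compat; [lra|nra].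
apply: near_mono (near_and A H) => x [h1 h2].
have gx : g x <> 0 by move=> e; rewrite e Rabs_R0 in h1; lra.
rewrite inv_diff //.
have hx : 0 < Rabs (g x) by apply: Rabs_pos_lt.
have u0 := Rabs_pos (g x - g x0); have v0 := vnorm_ge0 (x - x0)%R.
move: h1 h2 hx hp u0 v0; move: (Rabs (g x0)) (Rabs (g x)) (Rabs (g x - g x0)) (vnorm (x - x0)%R)
  => c a u v h1 h2 hx hp u0 v0.
have i1 : / a <= 2 / c.
  rewrite /Rdiv; apply: Rle_trans (_ : / (c / 2) <= _); first apply: Rinv_le_contravar; try lra.
  by rewrite Rinv_div; lra.
have i3 : 0 < / c by apply: Rinv_0_lt_compat.
have i4 : 0 < / a by apply: Rinv_0_lt_compat.
apply: (Rle_trans _ ((L * v) * (2 / c * / c))).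
  apply: Rmult_le_compat => //; first by apply: Rmult_le_pos; lra.
  by apply: Rmult_le_compat_r; lra.
have -> : 2 / c * / c = 2 / (c * c) by field; lra.
right; ring.
Qed.

Lemma sptL_local d (g h : 'cV[R]_d -> R) x0 : near x0 (fun x => g x = h x) ->
  sptL g x0 -> sptL h x0.
Proof.
move=> E [L [hL H]]; exists L; split => //; have e0 := near_refl E.
by apply: near_mono (near_and E H) => x [<- h1]; rewrite -e0.
Qed.

Lemma near2_mono d (x0 : 'cV[R]_d) (P Q : _ -> _ -> Prop) :
  (forall y z, P y z -> Q y z) -> near2 x0 P -> near2 x0 Q.
Proof. by move=> H [a [ha HP]]; exists a; split => // y z hy hz; apply/H/HP. Qed.

Lemma near2_and d (x0 : 'cV[R]_d) P Q : near2 x0 P -> near2 x0 Q -> near2 x0 (fun y z => P y z /\ Q y z).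
Proof.
move=> [a [ha HP]] [b [hb HQ]]; exists (Rmin a b); split; first exact: Rmin_pos.
move=> y z hy hz; have ha' := Rmin_l a b; have hb' := Rmin_r a b.
split; [apply: HP | apply: HQ]; lra.
Qed.

Lemma near2_of_near d (x0 : 'cV[R]_d) (P : _ -> Prop) : near x0 P -> near2 x0 (fun y z => P y /\ P z).
Proof. by move=> [a [ha HP]]; exists a; split => // y z hy hz; split; apply: HP. Qed.

Lemma sLip_ptL d (g : 'cV[R]_d -> R) x0 : sLip g x0 -> sptL g x0.
Proof.
move=> [L [hL [a [ha H]]]]; exists L; split => //; exists a; split => // x hx.
by apply: H => //; rewrite vnorm_subrr; lra.
Qed.

Lemma sLip_const d (a : R) (x0 : 'cV[R]_d) : sLip (fun _ => a) x0.
Proof.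
exists 0; split; first lra; exists 1; split; first lra.
move=> y z _ _; rewrite Rminus_diag Rabs_R0 Rmult_0_l; lra.
Qed.

Lemma sLip_add d (g h : 'cV[R]_d -> R) x0 : sLip g x0 -> sLip h x0 ->
  sLip (fun x => g x + h x) x0.
Proof.
move=> [L1 [h1 H1]] [L2 [h2 H2]]; exists (L1 + L2); split; first lra.
apply: near2_mono (near2_and H1 H2) => y z [a1 a2].
have -> : g y + h y - (g z + h z) = (g y - g z) + (h y - h z) by ring.
apply: Rle_trans (Rabs_triang _ _) _; lra.
Qed.

Lemma sLip_mul d (g h : 'cV[R]_d -> R) x0 : sLip g x0 -> sLip h x0 ->
  sLip (fun x => g x * h x) x0.
Proof.
move=> Hg Hh.
have Bg := near2_of_near (scont_bound (sptL_cont (sLip_ptL Hg))).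
have Bh := near2_of_near (scont_bound (sptL_cont (sLip_ptL Hh))).
move: Hg Hh => [L1 [h1 H1]] [L2 [h2 H2]].
set M := Rabs (g x0) + 1; set K := Rabs (h x0) + 1.
have hM : 0 <= M by rewrite /M; have := Rabs_pos (g x0); lra.
have hK : 0 <= K by rewrite /K; have := Rabs_pos (h x0); lra.
exists (M * L2 + K * L1); split.
  by apply: Rplus_le_le_0_compat; apply: Rmult_le_pos.
apply: near2_mono (near2_and Bg (near2_and Bh (near2_and H1 H2))) => y z [[b1 _] [[_ b2] [a1 a2]]].
apply: Rle_trans (prod_diff _ _ _ _) _.
have v0 := vnorm_ge0 (y - z)%R.
have t1 : Rabs (g y) * Rabs (h y - h z) <= M * (L2 * vnorm (y - z)%R)
  by apply: Rmult_le_compat => //; apply: Rabs_pos.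
have t2 : Rabs (h z) * Rabs (g y - g z) <= K * (L1 * vnorm (y - z)%R)
  by apply: Rmult_le_compat => //; apply: Rabs_pos.
move: t1 t2; move: (vnorm (y - z)%R) => v t1 t2; clear -t1 t2; move=> *; nra.
Qed.

Lemma sLip_inv d (g : 'cV[R]_d -> R) x0 : sLip g x0 -> g x0 <> 0 ->
  sLip (fun x => / g x) x0.
Proof.
move=> Hg hg; have A := near2_of_near (scont_away (sptL_cont (sLip_ptL Hg)) hg).
move: Hg => [L [hL H]].
have hp : 0 < Rabs (g x0) by apply: Rabs_pos_lt.
exists (L * (4 / (Rabs (g x0) * Rabs (g x0)))); split.
  apply: Rmult_le_pos => //; apply: Rlt_le; apply: Rdiv_lt_0_compat; [lra|nra].
apply: near2_mono (near2_and A H) => y z [[h1 h1'] h2].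
have gy : g y <> 0 by move=> e; rewrite e Rabs_R0 in h1; lra.
have gz : g z <> 0 by move=> e; rewrite e Rabs_R0 in h1'; lra.
rewrite inv_diff //.
have hy : 0 < Rabs (g y) by apply: Rabs_pos_lt.
have hz : 0 < Rabs (g z) by apply: Rabs_pos_lt.
have u0 := Rabs_pos (g y - g z); have v0 := vnorm_ge0 (y - z)%R.
move: h1 h1' h2 hy hz hp u0 v0; move: (Rabs (g x0)) (Rabs (g y)) (Rabs (g z)) (Rabs (g y - g z)) (vnorm (y - z)%R)
  => c a b u v h1 h1' h2 hy hz hp u0 v0.
have i1 : / a <= 2 / c.
  rewrite /Rdiv; apply: Rle_trans (_ : / (c / 2) <= _); first apply: Rinv_le_contravar; try lra.
  by rewrite Rinv_div; lra.
have i2 : / b <= 2 / c.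
  rewrite /Rdiv; apply: Rle_trans (_ : / (c / 2) <= _); first apply: Rinv_le_contravar; try lra.
  by rewrite Rinv_div; lra.
have i3 : 0 < / b by apply: Rinv_0_lt_compat.
have i4 : 0 < / a by apply: Rinv_0_lt_compat.
apply: (Rle_trans _ ((L * v) * (2 / c * (2 / c)))).
  apply: Rmult_le_compat => //; first by apply: Rmult_le_pos; lra.
  apply: Rmult_le_compat; lra.
have -> : 2 / c * (2 / c) = 4 / (c * c) by field; lra.
right; ring.
Qed.

Lemma sLip_local d (g h : 'cV[R]_d -> R) x0 : near x0 (fun x => g x = h x) ->
  sLip g x0 -> sLip h x0.
Proof.
move=> E [L [hL H]]; exists L; split => //.
by apply: near2_mono (near2_and (near2_of_near E) H) => y z [[<- <-] h1].
Qed.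

Lemma slin_zero d (h : 'cV[R]_d) : slin (fun _ => 0) h = 0.
Proof. rewrite /slin big1 // => i _; change (h i ord0 * 0 = 0); ring. Qed.

Lemma slin_add d (F G : 'I_d -> R) h : slin (fun i => F i + G i) h = slin F h + slin G h.
Proof.
rewrite /slin -sumRD; apply: eq_bigr => i _.
change (h i ord0 * (F i + G i) = h i ord0 * F i + h i ord0 * G i); ring.
Qed.

Lemma slin_scale d (F : 'I_d -> R) c h : slin (fun i => c * F i) h = c * slin F h.
Proof.
rewrite /slin -sumRM; apply: eq_bigr => i _.
change (h i ord0 * (c * F i) = c * (h i ord0 * F i)); ring.
Qed.

Definition cara d (g : 'cV[R]_d -> R) x (phi : 'cV[R]_d -> 'I_d -> R) :=
  near x (fun y => g y - g x = slin (phi y) (y - x)%R) /\ forall i, scont (fun y => phi y i) x.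

Lemma cara_ptL d (g : 'cV[R]_d -> R) x phi : cara g x phi -> sptL g x.
Proof.
move=> [E C].
have B := near_finite (fun i => scont_bound (C i)).
exists (\sum_i (Rabs (phi x i) + 1))%R; split.
  apply: sum_ge0 => i _; have := Rabs_pos (phi x i); move=> h; change (0 <= Rabs (phi x i) + 1); lra.
apply: near_mono (near_and E B) => y [e b]; rewrite e.
apply: Rle_trans (slin_bound _ _) _.
apply: Rmult_le_compat_r; first exact: vnorm_ge0.
by apply: sum_le => i _; apply: b.
Qed.

Lemma cara_cont d (g : 'cV[R]_d -> R) x phi : cara g x phi -> scont g x.
Proof. by move=> H; apply: sptL_cont (cara_ptL H). Qed.

Lemma cara_sder d (g : 'cV[R]_d -> R) x phi : cara g x phi -> sder g x (phi x).
Proof.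
move=> [E C] eps he.
have hd : 0 < INR d + 1 by have := pos_INR d; lra.
have e1 : 0 < eps / (INR d + 1) by apply: Rdiv_lt_0_compat.
have B := near_finite (fun i => C i _ e1).
apply: near_mono (near_and E B) => y [e b]; rewrite e slin_sub.
apply: Rle_trans (slin_bound _ _) _.
apply: Rmult_le_compat_r; first exact: vnorm_ge0.
apply: (Rle_trans _ (\sum_(i < d) (Rdiv eps (Rplus (INR d) 1)))%R).
  by apply: sum_le => i _; exact: (Rlt_le _ _ (b i)).
rewrite sum_const_ord.
have := pos_INR d; move: (INR d) hd e1 => k hd e1 hk.
apply: (Rle_trans _ ((k + 1) * (eps / (k + 1)))); first by apply: Rmult_le_compat_r; lra.
right; field; lra.
Qed.

Lemma slin_self d (h : 'cV[R]_d) (c : R) :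
  slin (fun i => c * h i ord0) h = c * (\sum_k (h k ord0 * h k ord0))%R.
Proof.
rewrite /slin -sumRM; apply: eq_bigr => i _.
change (h i ord0 * (c * h i ord0) = c * (h i ord0 * h i ord0)); ring.
Qed.

Lemma sder_cara d (g : 'cV[R]_d -> R) x D : sder g x D -> exists phi, cara g x phi /\ phi x = D.
Proof.
move=> H.
pose N (y : 'cV[R]_d) : R := (\sum_k ((y - x)%R k ord0 * (y - x)%R k ord0))%R.
pose Rm (y : 'cV[R]_d) : R := g y - g x - slin D (y - x)%R.
exists (fun y i => D i + (Rm y / N y) * (y - x)%R i ord0).
have hN : forall y, N y = 0 -> y = x.
  by move=> y /vnorm_eq0 /eqP; rewrite subr_eq0 => /eqP.
split; [split|].
- apply: near_all => y.
  rewrite slin_add slin_self -/(N y).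
  case: (Req_dec (N y) 0) => [/hN ->|hn].
    rewrite /Rm subrr slin0 /Rdiv; change (g x - g x = 0 + (g x - g x - 0) * / N x * N x); ring.
  by rewrite /Rm; field.
- move=> i eps he.
  have e1 : 0 < eps / 2 by lra.
  apply: near_mono (H _ e1) => y hy.
  have -> : D i + (Rm y / N y) * (y - x)%R i ord0 - (D i + (Rm x / N x) * (x - x)%R i ord0)
     = (Rm y / N y) * (y - x)%R i ord0.
    have z : (x - x)%R i ord0 = 0 by rewrite subrr mxE.
    rewrite z; ring.
  case: (Req_dec (N y) 0) => [hn|hn].
    rewrite hn /Rdiv Rinv_0 Rmult_0_r Rmult_0_l Rabs_R0; lra.
  have hv := vnorm_coord (y - x)%R i.
  have sq := vnorm_sq (y - x)%R.
  have v0 := vnorm_ge0 (y - x)%R.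
  rewrite -/(N y) in sq.
  rewrite /Rdiv !Rabs_mult Rabs_inv.
  move: hy hv sq v0 hn; rewrite -/(Rm y).
  move: (Rm y) ((y - x)%R i ord0) (N y) (vnorm (y - x)%R) => r a n v hy hv sq v0 hn.
  have vp : 0 < v.
    apply: Rnot_le_lt => hv0; have v00 : v = 0 by lra.
    by rewrite v00 Rmult_0_l in sq; lra.
  rewrite -sq Rabs_mult (Rabs_pos_eq v) //.
  have ra := Rabs_pos r; have aa := Rabs_pos a.
  have iv : 0 < / (v * v) by apply: Rinv_0_lt_compat; nra.
  apply: (Rle_lt_trans _ (eps / 2 * v * / (v * v) * v)); last first.
    have -> : eps / 2 * v * / (v * v) * v = eps / 2 by field; lra.
    lra.
  apply: Rmult_le_compat.
  - by apply: Rmult_le_pos => //; lra.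
  - exact: aa.
  - by apply: Rmult_le_compat_r; lra.
  - by [].
- apply: functional_extensionality => i.
  have z : (x - x)%R i ord0 = 0 by rewrite subrr mxE.
  by rewrite z Rmult_0_r Rplus_0_r.
Qed.

Lemma cara_const d (a : R) (x : 'cV[R]_d) : cara (fun _ => a) x (fun _ _ => 0).
Proof.
split; first by apply: near_all => y; rewrite slin_zero; ring.
by move=> i; apply: scont_const.
Qed.

Lemma cara_add d (g h : 'cV[R]_d -> R) x p q : cara g x p -> cara h x q ->
  cara (fun y => g y + h y) x (fun y i => p y i + q y i).
Proof.
move=> [E1 C1] [E2 C2]; split.
  apply: near_mono (near_and E1 E2) => y [e1 e2]; rewrite slin_add -e1 -e2; ring.
by move=> i; apply: scont_add.
Qed.

Lemma cara_mul d (g h : 'cV[R]_d -> R) x p q : cara g x p -> cara h x q ->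
  cara (fun y => g y * h y) x (fun y i => g y * q y i + h x * p y i).
Proof.
move=> Hg Hh; have Cg := cara_cont Hg.
move: Hg Hh => [E1 C1] [E2 C2]; split.
  apply: near_mono (near_and E1 E2) => y [e1 e2].
  by rewrite slin_add !slin_scale -e1 -e2; ring.
move=> i; apply: scont_add; apply: scont_mul => //; exact: scont_const.
Qed.

Lemma cara_inv d (g : 'cV[R]_d -> R) x p : cara g x p -> g x <> 0 ->
  cara (fun y => / g y) x (fun y i => - (/ g y * / g x) * p y i).
Proof.
move=> Hg hg; have Cg := cara_cont Hg; have A := scont_away Cg hg.
have hp : 0 < Rabs (g x) by apply: Rabs_pos_lt.
move: Hg => [E C]; split.
  apply: near_mono (near_and E A) => y [e a].
  have gy : g y <> 0 by move=> z; rewrite z Rabs_R0 in a; lra.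
  rewrite slin_scale -e; field; split => //.
move=> i; apply: scont_mul => //.
apply: (@scont_ext _ (fun y => -1 * (/ g y * / g x))); first by move=> y; ring.
apply: scont_mul; first exact: scont_const.
apply: scont_mul; [exact: scont_inv | exact: scont_const].
Qed.

Lemma cara_local d (g h : 'cV[R]_d -> R) x p : near x (fun y => g y = h y) ->
  cara g x p -> cara h x p.
Proof.
move=> E [E1 C]; split => //; have e0 := near_refl E.
by apply: near_mono (near_and E E1) => y [<- e]; rewrite -e0.
Qed.

Lemma sder_cont d (g : 'cV[R]_d -> R) x D : sder g x D -> scont g x.
Proof. by move=> /sder_cara [p [H _]]; apply: cara_cont H. Qed.

Lemma sder_const d (a : R) (x : 'cV[R]_d) : sder (fun _ => a) x (fun _ => 0).
Proof. exact: (cara_sder (cara_const a x)). Qed.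

Lemma sder_add d (g h : 'cV[R]_d -> R) x Dg Dh : sder g x Dg -> sder h x Dh ->
  sder (fun y => g y + h y) x (fun i => Dg i + Dh i).
Proof.
move=> /sder_cara [p [Hp <-]] /sder_cara [q [Hq <-]].
exact: (cara_sder (cara_add Hp Hq)).
Qed.

Lemma sder_mul d (g h : 'cV[R]_d -> R) x Dg Dh : sder g x Dg -> sder h x Dh ->
  sder (fun y => g y * h y) x (fun i => g x * Dh i + h x * Dg i).
Proof.
move=> /sder_cara [p [Hp <-]] /sder_cara [q [Hq <-]].
exact: (cara_sder (cara_mul Hp Hq)).
Qed.

Lemma sder_inv d (g : 'cV[R]_d -> R) x Dg : sder g x Dg -> g x <> 0 ->
  sder (fun y => / g y) x (fun i => - (/ g x * / g x) * Dg i).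
Proof.
move=> /sder_cara [p [Hp <-]] hg.
exact: (cara_sder (cara_inv Hp hg)).
Qed.

Lemma sder_local d (g h : 'cV[R]_d -> R) x D : near x (fun y => g y = h y) ->
  sder g x D -> sder h x D.
Proof.
move=> E /sder_cara [p [Hp <-]].
exact: (cara_sder (cara_local E Hp)).
Qed.

Lemma sC1_cont d (g : 'cV[R]_d -> R) x0 : sC1 g x0 -> scont g x0.
Proof. by move=> [D [H _]]; apply: sder_cont (near_refl H). Qed.

Lemma sC1_const d (a : R) (x0 : 'cV[R]_d) : sC1 (fun _ => a) x0.
Proof.
exists (fun _ _ => 0); split; first by apply: near_all => x; apply: sder_const.
by move=> i; apply: scont_const.
Qed.

Lemma sC1_add d (g h : 'cV[R]_d -> R) x0 : sC1 g x0 -> sC1 h x0 -> sC1 (fun x => g x + h x) x0.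
Proof.
move=> [Dg [Hg Cg]] [Dh [Hh Ch]].
exists (fun x i => Dg x i + Dh x i); split.
  by apply: near_mono (near_and Hg Hh) => x [a b]; apply: sder_add.
by move=> i; apply: scont_add.
Qed.

Lemma sC1_mul d (g h : 'cV[R]_d -> R) x0 : sC1 g x0 -> sC1 h x0 -> sC1 (fun x => g x * h x) x0.
Proof.
move=> G H; have cg := sC1_cont G; have ch := sC1_cont H.
move: G H => [Dg [Hg Cg]] [Dh [Hh Ch]].
exists (fun x i => g x * Dh x i + h x * Dg x i); split.
  by apply: near_mono (near_and Hg Hh) => x [a b]; apply: sder_mul.
by move=> i; apply: scont_add; apply: scont_mul.
Qed.

Lemma sC1_inv d (g : 'cV[R]_d -> R) x0 : sC1 g x0 -> g x0 <> 0 -> sC1 (fun x => / g x) x0.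
Proof.
move=> G hg; have cg := sC1_cont G; have A := scont_away cg hg.
have hp : 0 < Rabs (g x0) by apply: Rabs_pos_lt.
move: G => [Dg [Hg Cg]].
exists (fun x i => - (/ g x * / g x) * Dg x i); split.
  apply: near_mono (near_and Hg A) => x [a b]; apply: sder_inv => //.
  by move=> z; rewrite z Rabs_R0 in b; lra.
move=> i; apply: scont_mul => //.
apply: (@scont_ext _ (fun y => -1 * (/ g y * / g y))); first by move=> y; ring.
apply: scont_mul; first exact: scont_const.
by apply: scont_mul; apply: scont_inv.
Qed.

Lemma sC1_local d (g h : 'cV[R]_d -> R) x0 : near x0 (fun x => g x = h x) -> sC1 g x0 -> sC1 h x0.
Proof.
move=> E [D [H C]]; exists D; split => //.
by apply: near_mono (near_and (near_near E) H) => x [e s]; apply: sder_local e s.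
Qed.

Lemma sC_cont c d (g : 'cV[R]_d -> R) x0 : sC c g x0 -> scont g x0.
Proof.
case: c => /=.
- by [].
- exact: sptL_cont.
- by move=> H; apply: sptL_cont; apply: sLip_ptL.
- by move=> [D H]; apply: sder_cont H.
- exact: sC1_cont.
Qed.

Lemma sC_const c d (a : R) (x0 : 'cV[R]_d) : sC c (fun _ => a) x0.
Proof.
case: c => /=.
- exact: scont_const.
- exact: sptL_const.
- exact: sLip_const.
- by exists (fun _ => 0); apply: sder_const.
- exact: sC1_const.
Qed.

Lemma sC_add c d (g h : 'cV[R]_d -> R) x0 : sC c g x0 -> sC c h x0 -> sC c (fun x => g x + h x) x0.
Proof.
case: c => /=.
- exact: scont_add.
- exact: sptL_add.
- exact: sLip_add.
- by move=> [D1 H1] [D2 H2]; eexists; apply: sder_add H1 H2.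
- exact: sC1_add.
Qed.

Lemma sC_mul c d (g h : 'cV[R]_d -> R) x0 : sC c g x0 -> sC c h x0 -> sC c (fun x => g x * h x) x0.
Proof.
case: c => /=.
- exact: scont_mul.
- exact: sptL_mul.
- exact: sLip_mul.
- by move=> [D1 H1] [D2 H2]; eexists; apply: sder_mul H1 H2.
- exact: sC1_mul.
Qed.

Lemma sC_inv c d (g : 'cV[R]_d -> R) x0 : sC c g x0 -> g x0 <> 0 -> sC c (fun x => / g x) x0.
Proof.
case: c => /=.
- exact: scont_inv.
- exact: sptL_inv.
- exact: sLip_inv.
- by move=> [D1 H1] hg; eexists; apply: sder_inv H1 hg.
- exact: sC1_inv.
Qed.

Lemma sC_local c d (g h : 'cV[R]_d -> R) x0 : near x0 (fun x => g x = h x) -> sC c g x0 -> sC c h x0.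
Proof.
case: c => /= E.
- exact: scont_local.
- exact: sptL_local.
- exact: sLip_local.
- by move=> [D1 H1]; eexists; apply: sder_local H1.
- exact: sC1_local.
Qed.

Lemma sC_ext c d (g h : 'cV[R]_d -> R) x0 : (forall x, g x = h x) -> sC c g x0 -> sC c h x0.
Proof. by move=> E; apply: sC_local; apply: near_all. Qed.

Lemma sC_sum c d (x0 : 'cV[R]_d) (I : Type) (r : seq I) (P : pred I) (F : I -> 'cV[R]_d -> R) :
  (forall i, P i -> sC c (F i) x0) -> sC c (fun x => \sum_(i <- r | P i) F i x)%R x0.
Proof.
move=> H; elim: r => [|a r IH].
  by apply: (sC_ext (g := fun _ => 0)); [move=> x; rewrite big_nil | apply: sC_const].
case Pa: (P a).
  apply: (sC_ext (g := fun x => F a x + \sum_(i <- r | P i) F i x)%R).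
    by move=> x; rewrite big_cons Pa.
  by apply: sC_add => //; apply: H.
by apply: (sC_ext (g := fun x => \sum_(i <- r | P i) F i x)%R) => // x; rewrite big_cons Pa.
Qed.

Lemma sC_prod c d (x0 : 'cV[R]_d) (I : Type) (r : seq I) (P : pred I) (F : I -> 'cV[R]_d -> R) :
  (forall i, P i -> sC c (F i) x0) -> sC c (fun x => \prod_(i <- r | P i) F i x)%R x0.
Proof.
move=> H; elim: r => [|a r IH].
  by apply: (sC_ext (g := fun _ => 1)); [move=> x; rewrite big_nil | apply: sC_const].
case Pa: (P a).
  apply: (sC_ext (g := fun x => F a x * \prod_(i <- r | P i) F i x)%R).
    by move=> x; rewrite big_cons Pa.
  by apply: sC_mul => //; apply: H.
by apply: (sC_ext (g := fun x => \prod_(i <- r | P i) F i x)%R) => // x; rewrite big_cons Pa.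
Qed.

Definition snset p q (M : 'M[R]_(p, q)) :=
  fun r => exists v : 'cV[R]_q, vnorm v <= 1 /\ r = vnorm (M *m v)%R.

Definition ebound p q (M : 'M[R]_(p, q)) : R := (\sum_i \sum_j Rabs (M i j))%R.

Lemma snset_ub p q (M : 'M[R]_(p, q)) : is_upper_bound (snset M) (ebound M).
Proof.
move=> r [v [hv ->]].
apply: Rle_trans (vnorm_le_sum _) _.
apply: sum_le => i _; rewrite mxE.
apply: Rle_trans (Rabs_sum _ _ _) _.
apply: sum_le => j _.
change (Rabs (M i j * v j ord0) <= Rabs (M i j)).
rewrite Rabs_mult; rewrite -[X in _ <= X]Rmult_1_r.
apply: Rmult_le_compat_l; first exact: Rabs_pos.
by apply: Rle_trans (vnorm_coord v j) hv.
Qed.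

Lemma specnorm_lub p q (M : 'M[R]_(p, q)) : is_lub (snset M) (specnorm M).
Proof.
rewrite /specnorm; apply: epsilon_spec.
have h0 : vnorm (0 : 'cV[R]_q)%R <= 1 by rewrite vnorm0; lra.
have [m Hm] := completeness (snset M) (ex_intro _ _ (@snset_ub _ _ M))
  (ex_intro _ (vnorm (M *m 0)%R) (ex_intro _ 0%R (conj h0 erefl))).
by exists m.
Qed.

Lemma specnorm_le p q (M : 'M[R]_(p, q)) : specnorm M <= ebound M.
Proof. by have [_ H] := specnorm_lub M; apply: H; apply: (@snset_ub _ _ M). Qed.

Lemma vnorm_delta q (j : 'I_q) : vnorm (delta_mx j ord0 : 'cV[R]_q) <= 1.
Proof.
apply: Rle_trans (vnorm_le_sum _) _.
rewrite (bigD1 j) //= big1 => [|k hk]; last by rewrite mxE (negPf hk) /= Rabs_R0.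
rewrite mxE !eqxx /=; change (Rabs 1 + 0 <= 1); rewrite Rabs_R1; lra.
Qed.

Lemma specnorm_entry p q (M : 'M[R]_(p, q)) i j : Rabs (M i j) <= specnorm M.
Proof.
have [H _] := specnorm_lub M.
apply: Rle_trans (H _ (ex_intro _ _ (conj (vnorm_delta j) erefl))).
by rewrite -colE; have := vnorm_coord (col j M) i; rewrite mxE.
Qed.

Lemma ebound_le p q (M : 'M[R]_(p, q)) e : (forall i j, Rabs (M i j) <= e) ->
  ebound M <= INR p * (INR q * e).
Proof.
move=> H; rewrite /ebound.
apply: (Rle_trans _ (\sum_(i < p) (Rmult (INR q) e))%R); last by rewrite sum_const_ord; right.
apply: sum_le => i _.
apply: (Rle_trans _ (\sum_(j < q) e)%R); last by rewrite sum_const_ord; right.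
by apply: sum_le => j _; apply: H.
Qed.

Lemma specnorm_small p q (M : 'M[R]_(p, q)) e : (forall i j, Rabs (M i j) <= e) ->
  specnorm M <= INR p * (INR q * e).
Proof. by move=> H; apply: Rle_trans (specnorm_le M) (ebound_le H). Qed.

Lemma subE p q (A B : 'M[R]_(p, q)) i j : (A - B)%R i j = A i j - B i j.
Proof. by rewrite !mxE. Qed.

Lemma applinE d p q (Df : 'I_d -> 'M[R]_(p, q)) h i j :
  applin Df h i j = slin (fun k => Df k i j) h.
Proof. rewrite /applin summxE; apply: eq_bigr => k _; by rewrite mxE. Qed.

Lemma pq_small p q eps : 0 < eps -> exists e, 0 < e /\ INR p * (INR q * e) < eps.
Proof.
move=> he; have hp := pos_INR p; have hq := pos_INR q.
exists (eps / (INR p * INR q + 1)); split.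
  by apply: Rdiv_lt_0_compat => //; nra.
move: hp hq; move: (INR p) (INR q) => a b hp hq.
have h1 : 0 < a * b + 1 by nra.
have -> : a * (b * (eps / (a * b + 1))) = eps * (a * b / (a * b + 1)) by field; lra.
rewrite -[X in _ < X]Rmult_1_r; apply: Rmult_lt_compat_l => //.
have -> : a * b / (a * b + 1) = 1 - / (a * b + 1) by field; lra.
have := Rinv_0_lt_compat _ h1; lra.
Qed.

Definition mC c d p q (F : 'cV[R]_d -> 'M[R]_(p, q)) x0 := forall i j, sC c (fun x => F x i j) x0.

Lemma mat_cont d p q (f : 'cV[R]_d -> 'M[R]_(p, q)) x0 :
  cont_at f x0 <-> forall i j, scont (fun x => f x i j) x0.
Proof.
split.
  move=> H i j eps he; have [del [hd Hd]] := H eps he; exists del; split => // x hx.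
  by rewrite -subE; apply: Rle_lt_trans (specnorm_entry _ i j) (Hd x hx).
move=> H eps he; have [e [he1 he2]] := pq_small p q he.
have [del [hd Hd]] := near_finite (fun ij : 'I_p * 'I_q => H ij.1 ij.2 e he1).
exists del; split => // x hx.
apply: Rle_lt_trans he2.
apply: specnorm_small => i j; rewrite subE; apply: Rlt_le.
exact: (Hd x hx (i, j)).
Qed.

Lemma mat_der d p q (f : 'cV[R]_d -> 'M[R]_(p, q)) x Df :
  has_Frechet_deriv f x Df <-> forall i j, sder (fun y => f y i j) x (fun k => Df k i j).
Proof.
split.
  move=> H i j eps he; have [del [hd Hd]] := H eps he; exists del; split => // y hy.
  by rewrite -applinE -!subE; apply: Rle_trans (specnorm_entry _ i j) (Hd y hy).
move=> H eps he; have [e [he1 he2]] := pq_small p q he.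
have [del [hd Hd]] := near_finite (fun ij : 'I_p * 'I_q => H ij.1 ij.2 e he1).
exists del; split => // y hy.
have v0 := vnorm_ge0 (y - x)%R.
apply: (Rle_trans _ (INR p * (INR q * (e * vnorm (y - x)%R)))).
  apply: specnorm_small => i j; rewrite !subE applinE.
  exact: (Hd y hy (i, j)).
have hp := pos_INR p; have hq := pos_INR q.
move: v0 he2 hp hq; move: (vnorm (y - x)%R) (INR p) (INR q) => v a b v0 he2 hp hq.
have -> : a * (b * (e * v)) = (a * (b * e)) * v by ring.
by apply: Rmult_le_compat_r => //; lra.
Qed.

Lemma near2_finite d (x0 : 'cV[R]_d) (T : finType) (P : T -> 'cV[R]_d -> 'cV[R]_d -> Prop) :
  (forall i, near2 x0 (P i)) -> near2 x0 (fun y z => forall i, P i y z).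
Proof.
move=> H.
suff: near2 x0 (fun y z => forall i, i \in enum T -> P i y z).
  by apply: near2_mono => y z Hx i; apply: Hx; rewrite mem_enum.
elim: (enum T) => [|a s IH]; first by exists 1; split => //; lra.
apply: near2_mono (near2_and (H a) IH) => y z [h1 h2] i.
by rewrite in_cons => /orP [/eqP -> //| /h2].
Qed.

Lemma arith_pq (a b L v : R) : a * (b * (L * v)) = (a * (b * L)) * v.
Proof. ring. Qed.

Lemma pq_nonneg p q L : 0 <= L -> 0 <= INR p * (INR q * L).
Proof. move=> h; apply: Rmult_le_pos; first exact: pos_INR. apply: Rmult_le_pos => //; exact: pos_INR. Qed.

Lemma inC_mC c d p q (f : 'cV[R]_d -> 'M[R]_(p, q)) x0 : inC c f x0 <-> mC c f x0.
Proof.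
case: c => /=.
- by rewrite mat_cont.
- split.
    move=> [r [L [hr [hL H]]]] i j; exists L; split => //; exists r; split => // x hx.
    by rewrite -subE; apply: Rle_trans (specnorm_entry _ i j) (H x hx).
  move=> H.
  have [L HL] := @fin_ub ('I_p * 'I_q)%type (fun ij L =>
     near x0 (fun x => Rabs (f x ij.1 ij.2 - f x0 ij.1 ij.2) <= L * vnorm (x - x0)%R))
    ltac:(move=> ij a b hab N;
          apply: near_mono N => x hx; apply: Rle_trans hx _;
          apply: Rmult_le_compat_r => //; exact: vnorm_ge0)
    (fun ij => let: ex_intro L (conj _ N) := H ij.1 ij.2 in ex_intro _ L N).
  have hL1 : 0 <= Rmax L 0 by apply: Rmax_r.
  have N : near x0 (fun x => forall ij : 'I_p * 'I_q,
      Rabs (f x ij.1 ij.2 - f x0 ij.1 ij.2) <= Rmax L 0 * vnorm (x - x0)%R).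
    apply: near_finite => ij; apply: near_mono (HL ij) => x hx.
    apply: Rle_trans hx _; apply: Rmult_le_compat_r; [exact: vnorm_ge0 | exact: Rmax_l].
  have [r [hr Hr]] := N.
  exists r, (INR p * (INR q * Rmax L 0)); split => //; split; first exact: pq_nonneg.
  move=> x hx; rewrite -arith_pq; apply: specnorm_small => i j; rewrite subE.
  exact: (Hr x hx (i, j)).
- split.
    move=> [r [L [hr [hL H]]]] i j; exists L; split => //; exists r; split => // y z hy hz.
    by rewrite -subE; apply: Rle_trans (specnorm_entry _ i j) (H y z hy hz).
  move=> H.
  have [L HL] := @fin_ub ('I_p * 'I_q)%type (fun ij L =>
     near2 x0 (fun y z => Rabs (f y ij.1 ij.2 - f z ij.1 ij.2) <= L * vnorm (y - z)%R))
    ltac:(move=> ij a b hab N;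
          apply: near2_mono N => y z hx; apply: Rle_trans hx _;
          apply: Rmult_le_compat_r => //; exact: vnorm_ge0)
    (fun ij => let: ex_intro L (conj _ N) := H ij.1 ij.2 in ex_intro _ L N).
  have hL1 : 0 <= Rmax L 0 by apply: Rmax_r.
  have N : near2 x0 (fun y z => forall ij : 'I_p * 'I_q,
      Rabs (f y ij.1 ij.2 - f z ij.1 ij.2) <= Rmax L 0 * vnorm (y - z)%R).
    apply: near2_finite => ij; apply: near2_mono (HL ij) => y z hx.
    apply: Rle_trans hx _; apply: Rmult_le_compat_r; [exact: vnorm_ge0 | exact: Rmax_l].
  have [r [hr Hr]] := N.
  exists r, (INR p * (INR q * Rmax L 0)); split => //; split; first exact: pq_nonneg.
  move=> y z hy hz; rewrite -arith_pq; apply: specnorm_small => i j; rewrite subE.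
  exact: (Hr y z hy hz (i, j)).
- split.
    by move=> [Df H] i j; exists (fun k => Df k i j); move: i j; apply/mat_der.
  move=> H.
  have [Dfun HD] := @fin_choice ('I_p * 'I_q)%type _ (fun ij D => sder (fun x => f x ij.1 ij.2) x0 D)
    (fun ij => H ij.1 ij.2).
  exists (fun k => \matrix_(i, j) Dfun (i, j) k)%R; apply/mat_der => i j.
  have -> : (fun k => (\matrix_(i, j) Dfun (i, j) k)%R i j) = Dfun (i, j).
    by apply: functional_extensionality => k; rewrite mxE.
  exact: (HD (i, j)).
- split.
    move=> [r [Df [hr [Hd Hc]]]] i j; exists (fun x k => Df x k i j); split.
      exists r; split => // x hx; move: i j; apply/mat_der; exact: Hd.
    by move=> k; move: i j; apply/mat_cont; exact: Hc.
  move=> H.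
  have [Dfun HD] := @fin_choice ('I_p * 'I_q)%type _ (fun ij D =>
     near x0 (fun x => sder (fun y => f y ij.1 ij.2) x (D x)) /\ forall k, scont (fun x => D x k) x0)
    (fun ij => H ij.1 ij.2).
  have [r [hr Hr]] := near_finite (fun ij => (HD ij).1).
  exists r, (fun x k => \matrix_(i, j) Dfun (i, j) x k)%R; split => //; split.
    move=> x hx; apply/mat_der => i j.
    have -> : (fun k => (\matrix_(i, j) Dfun (i, j) x k)%R i j) = Dfun (i, j) x.
      by apply: functional_extensionality => k; rewrite mxE.
    exact: (Hr x hx (i, j)).
  move=> k; apply/mat_cont => i j.
  apply: (scont_ext (f := fun x => Dfun (i, j) x k)); first by move=> x; rewrite mxE.
  exact: ((HD (i, j)).2 k).
Qed.

Lemma mC_const (c : regclass) (d : nat) (x0 : 'cV[R]_d) p q (M : 'M[R]_(p, q)) : mC c (fun _ => M) x0.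
Proof. by move=> i j; apply: sC_const. Qed.

Lemma mC_add (c : regclass) (d : nat) (x0 : 'cV[R]_d) p q (F G : 'cV[R]_d -> 'M[R]_(p, q)) : mC c F x0 -> mC c G x0 ->
  mC c (fun x => F x + G x)%R x0.
Proof.
move=> HF HG i j; apply: (sC_ext (g := fun x => F x i j + G x i j)); first by move=> x; rewrite mxE.
exact: sC_add.
Qed.

Lemma mC_sub (c : regclass) (d : nat) (x0 : 'cV[R]_d) p q (F G : 'cV[R]_d -> 'M[R]_(p, q)) : mC c F x0 -> mC c G x0 ->
  mC c (fun x => F x - G x)%R x0.
Proof.
move=> HF HG i j; apply: (sC_ext (g := fun x => F x i j + (-1) * G x i j)).
  by move=> x; rewrite !mxE; change (F x i j + -1 * G x i j = F x i j + - G x i j); ring.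
by apply: sC_add => //; apply: sC_mul => //; apply: sC_const.
Qed.

Lemma mC_mul (c : regclass) (d : nat) (x0 : 'cV[R]_d) p q r (F : 'cV[R]_d -> 'M[R]_(p, q)) (G : 'cV[R]_d -> 'M[R]_(q, r)) :
  mC c F x0 -> mC c G x0 -> mC c (fun x => F x *m G x)%R x0.
Proof.
move=> HF HG i j; apply: (sC_ext (g := fun x => \sum_k (F x i k * G x k j))%R).
  by move=> x; rewrite mxE.
by apply: sC_sum => k _; apply: sC_mul.
Qed.

Lemma mC_tr (c : regclass) (d : nat) (x0 : 'cV[R]_d) p q (F : 'cV[R]_d -> 'M[R]_(p, q)) : mC c F x0 -> mC c (fun x => (F x)^T)%R x0.
Proof.
move=> HF i j; apply: (sC_ext (g := fun x => F x j i)); first by move=> x; rewrite mxE.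
exact: HF.
Qed.

Lemma sC_det (c : regclass) (d : nat) (x0 : 'cV[R]_d) n (F : 'cV[R]_d -> 'M[R]_n) : mC c F x0 -> sC c (fun x => (\det (F x))%R) x0.
Proof.
move=> HF.
apply: (sC_ext (g := fun x => \sum_(s : 'S_n) ((-1) ^+ s * \prod_i F x i (s i)))%R) => //.
apply: sC_sum => s _; apply: sC_mul; first exact: sC_const.
by apply: sC_prod => i _; apply: HF.
Qed.

Lemma mC_minor (c : regclass) (d : nat) (x0 : 'cV[R]_d) n (F : 'cV[R]_d -> 'M[R]_n.+1) i j : mC c F x0 ->
  mC c (fun x => row' i (col' j (F x))) x0.
Proof.
move=> HF k l; apply: (sC_ext (g := fun x => F x (lift i k) (lift j l))).
  by move=> x; rewrite !mxE.
exact: HF.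
Qed.

Lemma mC_adj (c : regclass) (d : nat) (x0 : 'cV[R]_d) n (F : 'cV[R]_d -> 'M[R]_n) : mC c F x0 -> mC c (fun x => (\adj (F x))%R) x0.
Proof.
case: n F => [|n] F HF i j; first by case: i.
apply: (sC_ext (g := fun x => (-1) ^+ (j + i) * \det (row' j (col' i (F x))))%R).
  by move=> x; rewrite mxE.
by apply: sC_mul; [apply: sC_const | apply: sC_det; apply: mC_minor].
Qed.

Lemma mC_inv (c : regclass) (d : nat) (x0 : 'cV[R]_d) n (F : 'cV[R]_d -> 'M[R]_n) : mC c F x0 -> (\det (F x0))%R <> 0 ->
  mC c (fun x => invmx (F x)) x0.
Proof.
move=> HF h0.
have Hd := sC_det HF.
have A := scont_away (sC_cont Hd) h0.
have hp : 0 < Rabs ((\det (F x0))%R) by apply: Rabs_pos_lt.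
move=> i j.
apply: (sC_local (g := fun x => / (\det (F x))%R * (\adj (F x))%R i j)).
  apply: near_mono A => x hx.
  have nz : (\det (F x))%R <> 0 by move=> z; rewrite z Rabs_R0 in hx; lra.
  rewrite /invmx unitmxE unitfE.
  have -> : ((\det (F x))%R != 0) = true by apply/eqP.
  by rewrite /= [RHS]mxE R_invE.
apply: sC_mul; first exact: sC_inv.
exact: mC_adj.
Qed.

Lemma mC_local (c : regclass) (d : nat) (x0 : 'cV[R]_d) p q (F G : 'cV[R]_d -> 'M[R]_(p, q)) : near x0 (fun x => F x = G x) ->
  mC c F x0 -> mC c G x0.
Proof.
move=> E HF i j; apply: (sC_local (g := fun x => F x i j)) => //.
by apply: near_mono E => x ->.
Qed.


Local Open Scope ring_scope.

Lemma pinv_unique m n (A : 'M[R]_(m, n)) B C : is_pinv A B -> is_pinv A C -> B = C.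
Proof.
move=> [h1 h2 h3 h4] [k1 k2 k3 k4].
have eAB : A *m B = A *m C.
  rewrite -h3 trmx_mul -{1}k1 !trmx_mul mulmxA -trmx_mul h3 -trmx_mul k3 mulmxA h1 //.
have eBA : B *m A = C *m A.
  rewrite -h4 trmx_mul -{1}k1 !trmx_mul mulmxA -mulmxA -trmx_mul -trmx_mul k4 h4.
  by rewrite !mulmxA -(mulmxA C A B) -(mulmxA C (A *m B) A) h1.
by rewrite -h2 -mulmxA eAB mulmxA eBA k2.
Qed.

Lemma gram_unit m r (F : 'M[R]_(m, r)) : \rank F = r -> F^T *m F \in unitmx.
Proof.
move=> hF; rewrite -row_free_unit; apply: inj_row_free => v hv.
set u := F *m v^T.
have hu : u^T *m u = 0 by rewrite /u trmx_mul trmxK mulmxA -(mulmxA v) hv mul0mx.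
have su : (\sum_k (u k ord0 * u k ord0))%R = 0%R.
  transitivity ((u^T *m u) ord0 ord0); last by rewrite hu mxE.
  rewrite [RHS]mxE; apply: eq_bigr => k _; rewrite [u^T _ _]mxE //.
have u0 := vnorm_eq0 su.
have : v *m F^T = 0 by rewrite -[v]trmxK -trmx_mul -/u u0 trmx0.
move/eqP; rewrite mulmx_free_eq0 ?(eqP _) //.
  by move/eqP.
by rewrite /row_free mxrank_tr hF.
Qed.

Definition fpinv m r n (F : 'M[R]_(m, r)) (G : 'M[R]_(r, n)) : 'M[R]_(n, m) :=
  G^T *m invmx (G *m G^T) *m invmx (F^T *m F) *m F^T.

Lemma sym_inv k (P : 'M[R]_k) : P^T = P -> (invmx P)^T = invmx P.
Proof. by move=> h; rewrite trmx_inv h. Qed.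

Lemma pinv_fact m r n (F : 'M[R]_(m, r)) (G : 'M[R]_(r, n)) :
  \rank F = r -> \rank G = r -> is_pinv (F *m G) (fpinv F G).
Proof.
move=> hF hG.
have uP := gram_unit hF.
have uQ : G *m G^T \in unitmx by have := gram_unit (F := G^T); rewrite mxrank_tr trmxK; apply.
set P := F^T *m F; set Q := G *m G^T.
have sP : P^T = P by rewrite /P trmx_mul trmxK.
have sQ : Q^T = Q by rewrite /Q trmx_mul trmxK.
have eAB : F *m G *m fpinv F G = F *m invmx P *m F^T.
  rewrite /fpinv !mulmxA -(mulmxA F G G^T) -/Q -(mulmxA F Q) mulmxV // mulmx1.
  by rewrite -/P.
have eBA : fpinv F G *m (F *m G) = G^T *m invmx Q *m G.
  rewrite /fpinv !mulmxA -/P -/Q -(mulmxA _ F^T F) -/P -(mulmxA _ (invmx P) P) mulVmx //.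
  by rewrite mulmx1.
split.
- rewrite eAB !mulmxA -(mulmxA _ F^T F) -/P -(mulmxA F (invmx P) P) mulVmx // mulmx1 //.
- rewrite eBA /fpinv !mulmxA -/P -/Q -(mulmxA _ G G^T) -/Q -(mulmxA G^T (invmx Q) Q) mulVmx //.
  by rewrite mulmx1.
- by rewrite eAB !trmx_mul trmxK (sym_inv sP) mulmxA.
- by rewrite eBA !trmx_mul trmxK (sym_inv sQ) mulmxA.
Qed.

Lemma pinv_spec m n (A : 'M[R]_(m, n)) : is_pinv A (pinv A).
Proof.
rewrite /pinv; apply: epsilon_spec.
set r := \rank A.
have rm : (r <= m)%N by apply: rank_leq_row.
have rn : (r <= n)%N by apply: rank_leq_col.
pose F := col_ebase A *m (pid_mx r : 'M_(m, r)).
pose G := (pid_mx r : 'M_(r, n)) *m row_ebase A.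
have eA : F *m G = A.
  rewrite /F /G mulmxA -(mulmxA _ _ (pid_mx r)) mul_pid_mx !minnn.
  exact: mulmx_ebase.
have hF : \rank F = r.
  by rewrite /F eqmxMfull ?rank_pid_mx // row_full_unit col_ebase_unit.
have hG : \rank G = r.
  by rewrite /G mxrankMfree ?rank_pid_mx // row_free_unit row_ebase_unit.
by exists (fpinv F G); rewrite -eA; apply: pinv_fact.
Qed.

Lemma pinvE m r n (A : 'M[R]_(m, n)) (F : 'M[R]_(m, r)) (G : 'M[R]_(r, n)) :
  A = F *m G -> \rank F = r -> \rank G = r -> pinv A = fpinv F G.
Proof.
by move=> eA hF hG; apply: pinv_unique (pinv_spec A) _; rewrite eA; apply: pinv_fact.
Qed.

Lemma sel_mx m n (A : 'M[R]_(m, n)) :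
  exists (S : 'M[R]_(\rank A, m)) (T : 'M[R]_(n, \rank A)), S *m A *m T = 1%:M.
Proof.
set r := \rank A.
have rm : (r <= m)%N by apply: rank_leq_row.
have rn : (r <= n)%N by apply: rank_leq_col.
exists ((pid_mx r : 'M_(r, m)) *m invmx (col_ebase A)), (invmx (row_ebase A) *m (pid_mx r : 'M_(n, r))).
rewrite -{2}[A]mulmx_ebase.
rewrite !mulmxA -(mulmxA (pid_mx r) (invmx (col_ebase A)) (col_ebase A)) mulVmx ?col_ebase_unit // mulmx1.
rewrite -(mulmxA _ (row_ebase A) (invmx (row_ebase A))) mulmxV ?row_ebase_unit // mulmx1.
rewrite !mul_pid_mx (_ : minn _ _ = r) ?pid_mx_1 //.
rewrite -/r; lia.
Qed.

Local Close Scope ring_scope.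

Lemma det_nz k (X : 'M[R]_k) : X \in unitmx -> (\det X)%R <> 0.
Proof. by rewrite unitmxE unitfE => /eqP. Qed.

Lemma lsc_rank d p q (N : 'cV[R]_d -> 'M[R]_(p, q)) x0 : mC C0 N x0 ->
  near x0 (fun x => (\rank (N x0) <= \rank (N x))%N).
Proof.
move=> HN; have [S [T e]] := sel_mx (N x0).
have hM : mC C0 (fun x => S *m N x *m T)%R x0.
  by apply: mC_mul; [apply: mC_mul => //; apply: mC_const | apply: mC_const].
have hd := sC_det hM.
have h0 : (\det (S *m N x0 *m T))%R <> 0 by rewrite e det1; exact: R1_neq_R0.
apply: near_mono (scont_away hd h0) => x hx.
have nz : (\det (S *m N x *m T))%R <> 0.
  have hp : 0 < Rabs (\det (S *m N x0 *m T))%R by apply: Rabs_pos_lt.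
  by move=> z; rewrite z Rabs_R0 in hx; lra.
have u : (S *m N x *m T)%R \in unitmx by rewrite unitmxE unitfE; apply/eqP.
have := mxrank_unit u => e1.
rewrite -{1}e1.
exact: leq_trans (mxrankM_maxl (S *m N x)%R T) (mxrankM_maxr S (N x)).
Qed.

Local Open Scope ring_scope.

Lemma fact_local m n k (A : 'M[R]_(m, n)) (S : 'M[R]_(k, m)) (T : 'M[R]_(n, k)) :
  \rank A = k -> S *m A *m T \in unitmx ->
  [/\ A = (A *m T) *m (invmx (S *m A *m T) *m S *m A),
      \rank (A *m T) = k & \rank (invmx (S *m A *m T) *m S *m A) = k].
Proof.
move=> hA hu; set M := S *m A *m T.
have hM : \rank M = k by apply: mxrank_unit.
have e1 : \rank (S *m A) = \rank A.
  apply/eqP; rewrite eqn_leq mxrankM_maxr /= hA -{1}hM.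
  exact: mxrankM_maxl.
have sub : (A <= S *m A)%MS.
  have := (mxrank_leqif_eq (submxMl S A)).2; rewrite e1 eqxx => /esym /andP [_ ->] //.
have [W eW] := submxP sub.
have eAT : A *m T = W *m M by rewrite {1}eW !mulmxA.
have eWv : W = A *m T *m invmx M by rewrite eAT mulmxK.
split.
- by rewrite {1}eW eWv !mulmxA.
- apply/eqP; rewrite eqn_leq rank_leq_col /= -{1}hM /M -mulmxA.
  exact: mxrankM_maxr.
- apply/eqP; rewrite eqn_leq rank_leq_row /=.
  have : invmx M *m S *m A *m T = 1%:M by rewrite -!mulmxA (mulmxA S) -/M mulVmx.
  move=> e2; rewrite -{1}(mxrank1 R k) -e2.
  exact: mxrankM_maxl.
Qed.

Local Close Scope ring_scope.

Lemma rank_facts m n (A : 'M[R]_(m, n)) :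
  let P := (A *m pinv A)%R in
  [/\ \rank P = \rank A, (\rank P + \rank (1%:M - P)%R <= m)%N & (m <= \rank P + \rank (1%:M - P)%R)%N].
Proof.
move=> P; have [h1 h2 h3 h4] := pinv_spec A.
have idem : (P *m P = P)%R by rewrite /P mulmxA h1.
split.
- apply/eqP; rewrite eqn_leq mxrankM_maxl /=.
  by rewrite -{1}h1; apply: mxrankM_maxl.
- have e0 : ((1%:M - P) *m P = 0)%R by rewrite mulmxBl mul1mx idem subrr.
  have := mxrank_mul_min (1%:M - P)%R P; rewrite e0 mxrank0; lia.
- have e1 : (P + (1%:M - P) = 1%:M)%R by rewrite addrC subrK.
  have := mxrank_add P (1%:M - P)%R; rewrite e1 mxrank1 //.
Qed.

Unset Implicit Arguments.

Theorem lemma4 (c : regclass) (d m n : nat) (x0 : 'cV[R]_d)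
    (A : 'cV[R]_d -> 'M[R]_(m, n)) :
  inC c A x0 ->
  (inC c (fun x => pinv (A x)) x0 <->
   exists r, 0 < r /\
     forall x, vnorm (x - x0)%R <= r -> \rank (A x) = \rank (A x0)).
Proof.
move=> HA; have mA := (inC_mC c A x0).1 HA.
split.
- move=> HB; have mB := (inC_mC c _ x0).1 HB.
  have cA : mC C0 A x0 by move=> i j; apply: sC_cont (mA i j).
  have cB : mC C0 (fun x => pinv (A x)) x0 by move=> i j; apply: sC_cont (mB i j).
  have cP : mC C0 (fun x => A x *m pinv (A x))%R x0 by apply: mC_mul.
  have cQ : mC C0 (fun x => 1%:M - A x *m pinv (A x))%R x0 by apply: mC_sub => //; apply: mC_const.
  have L1 := lsc_rank cA; have L2 := lsc_rank cQ.
  have [r [hr Hr]] := near_and L1 L2.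
  exists r; split => // x hx; have [l1 l2] := Hr x hx.
  have [f1 f2 f3] := rank_facts (A x); have [g1 g2 g3] := rank_facts (A x0).
  move: l1 l2 f1 f2 f3 g1 g2 g3.
  move: (\rank (A x)) (\rank (A x0)) (\rank (A x *m pinv (A x))%R) (\rank (A x0 *m pinv (A x0))%R)
    (\rank (1%:M - A x *m pinv (A x))%R) (\rank (1%:M - A x0 *m pinv (A x0))%R).
  move=> a a0 p p0 q q0; lia.
- move=> Hr.
  have [S [T e]] := sel_mx (A x0).
  set k := \rank (A x0) in S T e Hr.
  pose M x := (S *m A x *m T)%R.
  pose F x := (A x *m T)%R.
  pose G x := (invmx (M x) *m S *m A x)%R.
  have hM : mC c M x0 by apply: mC_mul; [apply: mC_mul => //; apply: mC_const | apply: mC_const].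
  have h0 : (\det (M x0))%R <> 0 by rewrite /M e det1; exact: R1_neq_R0.
  have nearU : near x0 (fun x => M x \in unitmx /\ \rank (A x) = k).
    apply: near_mono (near_and (scont_away (sC_cont (sC_det hM)) h0) Hr) => x [hx ->].
    split => //; rewrite unitmxE unitfE; apply/eqP => z.
    have hp : 0 < Rabs (\det (M x0))%R by apply: Rabs_pos_lt.
    by rewrite z Rabs_R0 in hx; lra.
  have u0 : M x0 \in unitmx by rewrite /M e unitmx1.
  have [_ hF0 hG0] := fact_local (erefl k) u0.
  have hF : mC c F x0 by apply: mC_mul => //; apply: mC_const.
  have hG : mC c G x0.
    apply: mC_mul => //; apply: mC_mul; [apply: mC_inv | apply: mC_const] => //.
  have hB : mC c (fun x => fpinv (F x) (G x)) x0.
    rewrite /fpinv; apply: mC_mul; last by apply: mC_tr.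
    apply: mC_mul; last first.
      apply: mC_inv; first by apply: mC_mul => //; apply: mC_tr.
      by apply: det_nz; apply: gram_unit.
    apply: mC_mul; first by apply: mC_tr.
    apply: mC_inv; first by apply: mC_mul => //; apply: mC_tr.
    apply: det_nz; have := gram_unit (F := (G x0)^T); rewrite trmxK mxrank_tr; apply.
    exact: hG0.
  apply/inC_mC; apply: mC_local hB.
  apply: near_mono nearU => x [ux rx].
  have [eA hFx hGx] := fact_local rx ux.
  by apply: esym; apply: pinvE.
Qed.
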